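(* Let $R$ be an associative ring with identity and involution $*$, and let $a\in R^{\#}\cap R^{\dagger}$. Then $a\in R^{SEP}$ if and only if, for both $k=2$ and $k=3$, $(a(a^{\#})^*a^{\dagger})^k$ is a left $(a^{\dagger}a^2)^k$-idempotent, i.e. $\big((a(a^{\#})^*a^{\dagger})^k\big)^2=(a^{\dagger}a^2)^k(a(a^{\#})^*a^{\dagger})^k$.
   Context: An involution on $R$ is a map $x\mapsto x^*$ with $(x^* )^*=x$, $(x+y)^*=x^*+y^*$, $(xy)^*=y^*x^*$. An element $a$ is Moore–Penrose invertible if there is $b$ with $aba=a$, $bab=b$, $(ab)^*=ab$, $(ba)^*=ba$; such $b$ is unique, denoted $a^{\dagger}$, and $R^{\dagger}$ is the set of such $a$. An element $a$ is group invertible if there is $b$ with $aba=a$, $bab=b$, $ab=ba$; such $b$ is unique, denoted $a^{\#}$, and $R^{\#}$ is the set of such $a$. For $a\in R^{\#}\cap R^{\dagger}$, $a$ is SEP if $a^*=a^{\dagger}=a^{\#}$; $R^{SEP}$ denotes the set of SEP elements. For $e,c\in R$, $e$ is a left $c$-idempotent if $e^2=ce$. *)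

(* Defs.v *)
From mathcomp Require Import all_boot all_algebra.
Set Implicit Arguments. Unset Strict Implicit. Unset Printing Implicit Defensive.
Import GRing.Theory.
Local Open Scope ring_scope.

Definition is_involution (R : pzRingType) (inv : R -> R) : Prop :=
  (forall x, inv (inv x) = x) /\
  (forall x y, inv (x + y) = inv x + inv y) /\
  (forall x y, inv (x * y) = inv y * inv x).

Definition is_MP_inverse (R : pzRingType) (st : R -> R) (a b : R) : Prop :=
  [/\ a * b * a = a, b * a * b = b, st (a * b) = a * b & st (b * a) = b * a].

Definition is_group_inverse (R : pzRingType) (a b : R) : Prop :=
  [/\ a * b * a = a, b * a * b = b & a * b = b * a].

(* a is SEP: a^* = a^dagger = a^#, given ad = a^dagger and ag = a^#. *)
Definition is_SEP (R : pzRingType) (st : R -> R) (a ad ag : R) : Prop :=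
  st a = ad /\ ad = ag.

Definition left_c_idempotent (R : pzRingType) (c e : R) : Prop :=
  e ^+ 2 = c * e.

(* Main.v *)
Require Import Defs.
From mathcomp Require Import all_boot all_algebra.
Import GRing.Theory.
Set Implicit Arguments.
Local Open Scope ring_scope.

Lemma ext2 (R : pzRingType) (u v r : R) : u * v = r -> forall x, x * u * v = x * r.
Proof. by move=> H x; rewrite -H mulrA. Qed.
Lemma ext3 (R : pzRingType) (u v w r : R) : u * v * w = r -> forall x, x * u * v * w = x * r.
Proof. by move=> H x; rewrite -H !mulrA. Qed.

Arguments ext2 {R u v r}.
Arguments ext3 {R u v w r}.
Lemma ext4 (R : pzRingType) (u v w y r : R) : u * v * w * y = r -> forall x, x * u * v * w * y = x * r.
Proof. by move=> H x; rewrite -H !mulrA. Qed.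
Arguments ext4 {R u v w y r}.
Lemma ext5 (R : pzRingType) (u v w y z r : R) : u * v * w * y * z = r -> forall x, x * u * v * w * y * z = x * r.
Proof. by move=> H x; rewrite -H !mulrA. Qed.
Arguments ext5 {R u v w y z r}.
Lemma ext6 (R : pzRingType) (u v w y z t r : R) : u * v * w * y * z * t = r -> forall x, x * u * v * w * y * z * t = x * r.
Proof. by move=> H x; rewrite -H !mulrA. Qed.
Arguments ext6 {R u v w y z t r}.
Lemma ext7 (R : pzRingType) (u v w y z t o r : R) : u * v * w * y * z * t * o = r -> forall x, x * u * v * w * y * z * t * o = x * r.
Proof. by move=> H x; rewrite -H !mulrA. Qed.
Arguments ext7 {R u v w y z t o r}.
Section S.
Variables (R : pzRingType) (st : R -> R) (a d g : R).
Hypothesis (Hst : is_involution st) (Hd : is_MP_inverse st a d) (Hg : is_group_inverse a g).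

Lemma back :
   (forall k : nat, (k = 2 \/ k = 3)%N ->
      left_c_idempotent ((d * a ^+ 2) ^+ k) ((a * st g * d) ^+ k)) -> is_SEP st a d g.
Proof.
case: Hst => stK [stD stM]; case: Hd => M1 M2 M3 M4; case: Hg => G1 G2 G3.
have F7 : st a * a * d = st a by rewrite -{3}M1 stM M3 mulrA.
have F6 : d * a * st a = st a by rewrite -{3}M1 -(mulrA a d a) stM M4.
have Gg : g * g * a = g by rewrite -mulrA -G3 mulrA G2.
have Gg' : a * g * g = g by rewrite G3 G2.
have F8 : st a * st g * st g = st g by rewrite -!stM mulrA Gg.
have F9 : st g * st g * st a = st g by rewrite -!stM mulrA Gg'.
move: F6 F7 F8 F9; set q := st g; set s := st a => F6 F7 F8 F9.
have F10 : d * a * q = q by rewrite -{1}F8 !mulrA F6 F8.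
have F11 : q * a * d = q by rewrite -{1}F9 (ext3 F7) F9.
have Ga : a * a * g = a by rewrite -mulrA G3 mulrA G1.
have F12 : q * s * s = s by rewrite /q /s -!stM mulrA Ga.
have F10p : forall m, d * a * q ^+ m.+1 = q ^+ m.+1 by move=> m; rewrite exprS !mulrA F10.
have xpow : forall n, (a * q * d) ^+ n.+1 = a * q ^+ n.+1 * d.
  elim=> [|n IH]; first by rewrite !expr1.
  by rewrite [in RHS]exprS [in LHS]exprS IH !mulrA (ext3 (F10p n)).
have cpow : forall n, (d * a ^+ 2) ^+ n.+1 = d * a ^+ n.+2.
  elim=> [|n IH]; first by rewrite !expr1.
  by rewrite exprS IH expr2 (exprS a n.+1) !mulrA (ext3 M1).
move=> H.
have E2 := H 2%N (or_introl erefl).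
have E3 := H 3%N (or_intror erefl).
rewrite /left_c_idempotent -exprM !xpow !cpow /= in E2 E3.
rewrite !exprS !expr0 !mulr1 !mulrA in E2 E3.
rewrite ?(ext3 F10) in E3.
have E2' : a * q * q * q = d * a * a * a * a * q.
  by have := congr1 (fun y => y * a * s) E2; rewrite /= ?mulrA !(ext3 F6) !(ext3 F9).
have E3' : a * q * q * q * q * q = d * a * a * a * a * a * q * q.
  by have := congr1 (fun y => y * a * s) E3; rewrite /= ?mulrA !(ext3 F6) !(ext3 F9).
have A2 : a * a * q * q * q = a * a * a * a * q.
  by have := congr1 (fun y => a * y) E2'; rewrite /= ?mulrA M1.
have A3 : a * a * q * q * q * q * q = a * a * a * a * a * q * q.
  by have := congr1 (fun y => a * y) E3'; rewrite /= ?mulrA M1.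
have GA : g * a * a = a by rewrite -G3 G1.
have A4 : a * a * a * a * a * a * q = a * a * a * a * a * q * q.
  by rewrite -A3 A2 (ext5 A2) !mulrA.
have B : a * a * q = a * q * q.
  move: A4; do 4! (move/(congr1 (fun y => g * y)) => /=; rewrite !mulrA GA).
  done.
have C : a * a * a * q = d * a * a * a * a * q.
  by rewrite -E2' -B (ext3 B) ?mulrA.
have S1 : s * st d = d * a by rewrite /s -stM M4.
have D : a * a * a = d * a * a * a * a.
  move: C => /(congr1 (fun y => y * s * s)) /=; rewrite ?mulrA !(ext3 F12).
  move=> /(congr1 (fun y => y * st d)) /=; rewrite !(ext2 S1) ?mulrA !(ext3 M1).
  done.
have P : a * g = d * a.
  move: D; do 3! (move/(congr1 (fun y => y * g)) => /=; rewrite ?(ext3 Ga) ?Ga ?mulrA).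
  done.
have PE : a * g * (a * d) = a * d by rewrite mulrA G1.
have EP : a * d * (a * g) = a * g by rewrite mulrA M1.
have stp : st (a * g) = a * g by rewrite P M4.
have Eq : a * d = a * g by rewrite -M3 -{1}PE stM M3 stp EP.
have gd : g = d by rewrite -{1}G2 -mulrA -Eq mulrA -G3 P M2.
have aq : a * q = q * q.
  by move: B => /(congr1 (fun y => d * y)) /=; rewrite ?mulrA F10 -P G1.
have qs : q * s = a * g by rewrite /q /s -stM stp.
have aq2 : a * a * g = q by rewrite -F9 -aq -(mulrA a q s) qs mulrA.
have sa : st a = g by rewrite -[in LHS]Ga aq2 /q stK.
by rewrite /is_SEP /s sa gd.
Qed.

Lemma fwd : is_SEP st a d g ->
   (forall k : nat, (k = 2 \/ k = 3)%N ->
      left_c_idempotent ((d * a ^+ 2) ^+ k) ((a * st g * d) ^+ k)).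
Proof.
case: Hst => stK [stD stM]; case: Hg => G1 G2 G3.
case=> sa dg k _; rewrite dg; rewrite dg in sa.
have q : st g = a by rewrite -sa stK.
have Ga : a * a * g = a by rewrite -mulrA G3 mulrA G1.
have GA : g * a * a = a by rewrite -G3 G1.
by rewrite /left_c_idempotent q Ga (expr2 a) mulrA GA expr2.
Qed.
End S.

Theorem theorem4p3 (R : pzRingType) (st : R -> R) (a ad ag : R) :
  is_involution st ->
  is_MP_inverse st a ad ->
  is_group_inverse a ag ->
  (is_SEP st a ad ag <->
   (forall k : nat, (k = 2 \/ k = 3)%N ->
      left_c_idempotent ((ad * a ^+ 2) ^+ k) ((a * st ag * ad) ^+ k))).
Proof. by move=> H1 H2 H3; split; [apply: fwd | apply: back]. Qed.
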